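(* Let $f:(M,g_M)\to(N,g_N)$ be a conformal Riemannian morphism between Riemannian manifolds with $\dim M=m$, $\dim N=n$, and Riemannian factor $\wedge_f$. Then for every $x\in M$, $$\wedge_f(x)\,\mathrm{rank}(df_x)\le\|df_x\|_F^2,$$ where $\|T\|_F=\sqrt{\mathrm{trace}(T^{*}T)}$ denotes the Frobenius norm of a linear map $T$ between inner-product spaces.
   Context: A linear map $T:V\to W$ between real inner-product spaces is a geometric function if there exist a subspace $C\subset V$ with $V=\ker T\oplus C$ and $r>0$ with $\langle T u,T v\rangle=r\langle u,v\rangle$ for all $u,v\in C$ ($r$ is a conformality factor). A smooth $f:(M,g_M)\to(N,g_N)$ is a conformal Riemannian morphism if there is a smooth $\wedge_f:M\to\mathbb{R}^{+}$, the Riemannian factor, such that each $df_x$ is a geometric function with conformality factor $\wedge_f(x)$. The Frobenius norm of $df_x$ is taken with respect to $g_M(x)$ and $g_N(f(x))$. *)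

(* Defs.v *)
From HB Require Import structures.
From mathcomp Require Import all_boot all_order all_algebra.
From mathcomp Require Import reals.
Set Implicit Arguments. Unset Strict Implicit. Unset Printing Implicit Defensive.
Import Order.TTheory GRing.Theory Num.Theory.
Local Open Scope ring_scope.

(* Finite-dimensional real inner-product spaces are modelled in coordinates:
   vectors are row vectors 'rV[R]_m, an inner product is given by its Gram
   matrix G (symmetric, positive definite): <u,v>_G = u G v^T.
   A linear map T : R^m -> R^n is u |-> u *m A with A : 'M_(m,n). *)

Definition ip (R : realType) (m : nat) (G : 'M[R]_m) (u v : 'rV[R]_m) : R :=
  (u *m G *m v^T) 0 0.

Definition gram_pd (R : realType) (m : nat) (G : 'M[R]_m) : Prop :=
  G^T = G /\ forall u : 'rV[R]_m, u != 0 -> 0 < ip G u u.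

Definition geometric_with (R : realType) (m n : nat)
  (GM : 'M[R]_m) (GN : 'M[R]_n) (A : 'M[R]_(m, n)) (r : R) : Prop :=
  0 < r /\
  exists C : 'M[R]_m,
    (kermx A :&: C == (0 : 'M[R]_m))%MS /\ (kermx A + C == (1%:M : 'M[R]_m))%MS /\
    forall u v : 'rV[R]_m, (u <= C)%MS -> (v <= C)%MS ->
      ip GN (u *m A) (v *m A) = r * ip GM u v.

(* Adjoint of T w.r.t. the inner products GM, GN : the matrix Astar with
   <u A, w>_GN = <u, w Astar>_GM ; explicitly Astar = GN A^T GM^{-1}. *)
Definition adjoint (R : realType) (m n : nat)
  (GM : 'M[R]_m) (GN : 'M[R]_n) (A : 'M[R]_(m, n)) : 'M[R]_(n, m) :=
  GN *m A^T *m invmx GM.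

Definition frob2 (R : realType) (m n : nat)
  (GM : 'M[R]_m) (GN : 'M[R]_n) (A : 'M[R]_(m, n)) : R :=
  \tr (A *m adjoint GM GN A).

(* Main.v *)
Require Import Defs.
From HB Require Import structures.
From mathcomp Require Import all_boot all_order all_algebra.
From mathcomp Require Import reals.
From mathcomp Require Import zify lra.
Import Order.TTheory GRing.Theory Num.Theory.
Local Open Scope ring_scope.

Lemma trace_idem_aux (F : fieldType) m r (X : 'M[F]_(m, r)) (Y : 'M[F]_(r, m)) :
  row_free Y -> row_free X^T -> X *m Y *m (X *m Y) = X *m Y ->
  \tr (X *m Y) = r%:R.
Proof.
move=> hY hX PP.
have hYX : Y *m X = 1%:M.
  apply: (row_free_inj hY); rewrite mul1mx.
  apply: trmx_inj; apply: (row_free_inj hX).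
  rewrite /= -!trmx_mul; congr (_ ^T).
  by rewrite -[RHS]PP !mulmxA.
by rewrite mxtrace_mulC hYX mxtrace1.
Qed.

Lemma trace_idem (F : fieldType) m (P : 'M[F]_m) :
  P *m P = P -> \tr P = (\rank P)%:R.
Proof.
move=> PP; rewrite -{1}(mulmx_base P) trace_idem_aux //.
- exact: row_base_free.
- by rewrite /row_free mxrank_tr; exact: col_base_full.
- by rewrite mulmx_base.
Qed.

Lemma entry_rows (R : comPzRingType) m n k (X : 'M[R]_(m, k)) (M : 'M[R]_k) (Y : 'M[R]_(n,k)) i j :
  (row i X *m M *m (row j Y)^T) 0 0 = (X *m M *m Y^T) i j.
Proof.
rewrite -row_mul tr_row !mxE; apply: eq_bigr => p _; rewrite !mxE.
by [].
Qed.

Lemma gram_schmidt (R : realType) m (G : 'M[R]_m) : G^T = G ->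
  (forall u : 'rV_m, u != 0 -> 0 < (u *m G *m u^T) 0 0) ->
  forall k, (k <= m)%N -> exists E : 'M[R]_(k, m), E *m G *m E^T = 1%:M.
Proof.
move=> Gs Gpd; elim => [|k IH] hk.
  by exists 0; apply/matrixP => -[].
have [E hE] := IH (ltnW hk).
have nfull : ~~ (1%:M <= E)%MS.
  apply/negP => h; have := mxrankS h; rewrite mxrank1 => h2.
  by have := leq_trans h2 (rank_leq_row E); rewrite leqNgt hk.
have [i hi] := row_subPn nfull.
set v := row i 1%:M in hi.
set w := v - v *m G *m E^T *m E.
have wE : w *m G *m E^T = 0.
  rewrite /w !mulmxBl.
  have -> : v *m G *m E^T *m E *m G *m E^T = v *m G *m E^T *m (E *m G *m E^T)
    by rewrite !mulmxA.
  by rewrite hE mulmx1 subrr.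
have wn0 : w != 0.
  apply: contra hi => /eqP w0.
  have -> : v = v *m G *m E^T *m E by apply/eqP; rewrite -subr_eq0 -/w w0.
  exact: submxMl.
set q := (w *m G *m w^T) 0 0.
have hq : 0 < q := Gpd _ wn0.
set s := Num.sqrt q.
have hs : 0 < s by rewrite sqrtr_gt0.
set w' := s^-1 *: w.
exists (col_mx w' E : 'M_(k.+1, m)).
have e1 : w' *m G *m w'^T = 1%:M.
  rewrite [LHS]mx11_scalar /w' linearZ /= -!scalemxAl -scalemxAr !mxE -/q.
  congr (_%:M).
  have -> : \sum_j (w *m G) 0 j * w^T j 0 = q by rewrite /q mxE.
  rewrite mulrA -expr2 exprVn sqr_sqrtr ?ltW // mulVf //.
  by rewrite gt_eqF.
have e2 : w' *m G *m E^T = 0 by rewrite /w' -!scalemxAl wE scaler0.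
have e3 : E *m G *m w'^T = 0.
  by rewrite -[E](trmxK) -[G]Gs -!trmx_mul mulmxA e2 trmx0.
rewrite (tr_col_mx w' E) (mul_col_mx w' E G) (mul_col_row (w' *m G) (E *m G) w'^T E^T).
rewrite e1 e2 e3 hE.
exact: (esym (scalar_mx_block 1 k 1)).
Qed.

Lemma inv_gram (R : realType) m (G : 'M[R]_m) : G^T = G ->
  (forall u : 'rV_m, u != 0 -> 0 < (u *m G *m u^T) 0 0) ->
  exists E : 'M[R]_m, invmx G = E^T *m E.
Proof.
move=> Gs Gpd; have [E hE] := @gram_schmidt R m G Gs Gpd m (leqnn m).
have [Eu _] : E \in unitmx /\ (G *m E^T) \in unitmx by apply: mulmx1_unit; rewrite mulmxA.
have hG : G *m (E^T *m E) = 1%:M.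
  apply: (can_inj (mulKmx Eu)); rewrite mulmx1 !mulmxA hE mul1mx //.
have [Gu _] := mulmx1_unit hG.
exists E; by rewrite -[LHS]mulmx1 -hG (mulmxA (invmx G)) mulVmx // mul1mx.
Qed.

Lemma psd_trace (R : realType) m (G : 'M[R]_m) : G^T = G ->
  (forall u : 'rV_m, u != 0 -> 0 < (u *m G *m u^T) 0 0) ->
  forall Z : 'M[R]_m, 0 <= \tr (Z *m G *m Z^T *m invmx G).
Proof.
move=> Gs Gpd Z; have [E ->] := @inv_gram R m G Gs Gpd.
rewrite mulmxA mxtrace_mulC !mulmxA -(mulmxA _ Z^T) -trmx_mul.
rewrite /mxtrace; apply: sumr_ge0 => i _.
rewrite -entry_rows.
have [->|nz] := eqVneq (row i (E *m Z)) 0.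
  by rewrite mul0mx mul0mx mxE.
exact: ltW (Gpd _ nz).
Qed.

Lemma gram_unit (R : realType) m (G : 'M[R]_m) : G^T = G ->
  (forall u : 'rV_m, u != 0 -> 0 < (u *m G *m u^T) 0 0) ->
  G \in unitmx.
Proof.
move=> Gs Gpd; have [E hE] := @gram_schmidt R m G Gs Gpd m (leqnn m).
have [Eu _] : E \in unitmx /\ (G *m E^T) \in unitmx by apply: mulmx1_unit; rewrite mulmxA.
have hG : G *m (E^T *m E) = 1%:M.
  apply: (can_inj (mulKmx Eu)); rewrite mulmx1 !mulmxA hE mul1mx //.
by have [] := mulmx1_unit hG.
Qed.

Lemma key_ineq (R : realType) m (G : 'M[R]_m) (P : 'M[R]_m) : G^T = G ->
  (forall u : 'rV_m, u != 0 -> 0 < (u *m G *m u^T) 0 0) ->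
  P *m P = P -> \tr P <= \tr (P *m G *m P^T *m invmx G).
Proof.
move=> Gs Gpd PP.
have Gu : G \in unitmx := @gram_unit R m G Gs Gpd.
set H := invmx G.
have GH : G *m H = 1%:M by rewrite mulmxV.
have HG : H *m G = 1%:M by rewrite mulVmx.
have Hs : H^T = H by rewrite /H trmx_inv Gs.
set Ps := G *m P^T *m H.
have PsT : Ps^T = H *m P *m G by rewrite /Ps !trmx_mul Hs Gs trmxK mulmxA.
have e1 : G *m (P - Ps)^T *m H = Ps - P.
  rewrite linearB /= PsT mulmxBr mulmxBl; congr (_ - _).
  by rewrite !mulmxA GH mul1mx -!mulmxA GH mulmx1.
have hZ := @psd_trace R m G Gs Gpd (P - Ps).
have eZ : (P - Ps) *m G *m (P - Ps)^T *m H = (P - Ps) *m (Ps - P) by rewrite -e1 !mulmxA.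
rewrite eZ in hZ.
have trPs : \tr Ps = \tr P by rewrite /Ps mxtrace_mulC mulmxA HG mul1mx mxtrace_tr.
have PsPs : Ps *m Ps = Ps.
  by rewrite /Ps !mulmxA -(mulmxA _ H G) HG mulmx1 -(mulmxA G) -trmx_mul PP.
have tPPs : \tr (P *m Ps) = \tr (P *m G *m P^T *m H) by rewrite /Ps !mulmxA.
have tPsP : \tr (Ps *m P) = \tr (P *m Ps) by rewrite mxtrace_mulC.
move: hZ; rewrite !(mulmxBl, mulmxBr) !linearB /= PP PsPs trPs tPsP tPPs.
lra.
Qed.

Theorem mainTheorem13 (R : realType) (m n : nat) (M N : Type)
  (gM : M -> 'M[R]_m) (gN : N -> 'M[R]_n)
  (f : M -> N) (df : M -> 'M[R]_(m, n)) (Lam : M -> R)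
  (hgM : forall x, gram_pd (gM x)) (hgN : forall y, gram_pd (gN y))
  (hLam : forall x, 0 < Lam x)
  (hconf : forall x, geometric_with (gM x) (gN (f x)) (df x) (Lam x)) :
  forall x : M,
    Lam x * (\rank (df x))%:R <= frob2 (gM x) (gN (f x)) (df x).
Proof.
move=> x.
have [Gs Gpd] := hgM x.
have [_ [C [hcap [hsum hC]]]] := hconf x.
move: (hLam x) Gs Gpd hcap hsum hC.
rewrite /frob2 /adjoint /ip.
move: (gM x) (gN (f x)) (df x) (Lam x) => G GN A L hL Gs Gpd hcap hsum hC.
set K := kermx A.
have capCK : (C :&: K = 0)%MS by rewrite capmxC; apply/eqmx0P.
set P := proj_mx C K.
have hPC : (P <= C)%MS by rewrite -[P]mul1mx proj_mx_sub.
have PP : P *m P = P := proj_mx_id capCK hPC.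
have h1 : (1%:M <= C + K)%MS.
  by rewrite addsmxC; move/eqmxP: hsum => ->.
have hPA : P *m A = A.
  have := proj_mx_compl_sub h1; rewrite mul1mx => /sub_kermxP.
  by rewrite mulmxBl mul1mx => /eqP; rewrite subr_eq0 => /eqP <-.
have rP : \rank P = \rank A.
  have CP : (C <= P)%MS by rewrite -[X in (X <= _)%MS](proj_mx_id capCK (submx_refl C)) submxMl.
  have -> : \rank P = \rank C by apply/eqP; rewrite eqn_leq !mxrankS.
  have := mxrank_sum_cap K C.
  rewrite (eqmx_rank hsum); move/eqmx0P: hcap => ->.
  rewrite mxrank1 mxrank0 mxrank_ker.
  have := rank_leq_row A; lia.
clearbody P.
have hQ : A *m GN *m A^T = L *: (P *m G *m P^T).
  apply/matrixP => i j.
  rewrite -{1}hPA -{2}hPA -(@entry_rows _ _ _ _ (P *m A) GN (P *m A)) [RHS]mxE -(@entry_rows _ _ _ _ P G P) !row_mul.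
  by rewrite hC // (submx_trans (row_sub _ _) hPC).
rewrite !mulmxA hQ -scalemxAl mxtraceZ ler_pM2l // -rP -trace_idem //.
exact: key_ineq.
Qed.
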